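(* Let $(L,\sqsubseteq)$ be a countably complete lattice, $F:L\to L$ monotone and $\omega$-continuous, $k\in\omega$, and $b\in L^\omega$ with $b_{n+1}\sqsubseteq b_n$ for all $n$. Define sequences $G^j b$ by $(G^0b)_n=b_n$ and $(G^{j}b)_n=F\big((G^{j-1}b)_n\big)\sqcap b_n$ for $j\ge1$. If $F\big((G^kb)_n\big)\sqsubseteq b_n$ for all $n$, then $\sup_{i\ge n}F^i(\bot)\sqsubseteq b_n$ for all $n$. In particular, for $\ell\in L$ and $G_\ell(m)=F(m)\sqcap\ell$: if $F(G_\ell^k(\ell))\sqsubseteq\ell$ then $\sup_i F^i(\bot)=\mathrm{lfp}\,F\sqsubseteq\ell$.
   Context: A countably complete lattice is a lattice in which every countable subset (including $\emptyset$) has a supremum and an infimum, with least element $\bot$ and meet $\sqcap$. $F$ is $\omega$-continuous if $F(\sup_n c_n)=\sup_n F(c_n)$ for every ascending chain $(c_n)$. $F^i$ is the $i$-fold iterate. *)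

(* Defs.v *)
From mathcomp Require Import all_boot all_order.
Set Implicit Arguments. Unset Strict Implicit. Unset Printing Implicit Defensive.
Import Order.Theory.
Local Open Scope order_scope.

Section CCL.
Context {disp : Order.disp_t} {L : bLatticeType disp}.

Definition is_ub (A : L -> Prop) (x : L) := forall y, A y -> y <= x.
Definition is_lb (A : L -> Prop) (x : L) := forall y, A y -> x <= y.
Definition is_sup (A : L -> Prop) (x : L) :=
  is_ub A x /\ forall z, is_ub A z -> x <= z.
Definition is_inf (A : L -> Prop) (x : L) :=
  is_lb A x /\ forall z, is_lb A z -> z <= x.

Definition seq_range (u : nat -> L) : L -> Prop := fun y => exists i, y = u i.

(* Nonempty countable subsets are exactly ranges of sequences; the empty set
   has sup \bot (bottom of the bLattice) and inf = a top element. *)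
Definition countably_complete :=
  (forall u : nat -> L, exists s, is_sup (seq_range u) s) /\
  (forall u : nat -> L, exists s, is_inf (seq_range u) s) /\
  (exists t, is_inf (fun _ => False) t).

Definition monotone (F : L -> L) := forall x y, x <= y -> F x <= F y.

Definition omega_continuous (F : L -> L) :=
  forall c : nat -> L, (forall n, c n <= c n.+1) ->
  forall s, is_sup (seq_range c) s -> is_sup (seq_range (fun n => F (c n))) (F s).

Fixpoint Giter (F : L -> L) (b : nat -> L) (j n : nat) : L :=
  match j with
  | 0 => b n
  | j'.+1 => F (Giter F b j' n) `&` b n
  end.

Definition Gl (F : L -> L) (l : L) (m : L) : L := F m `&` l.

Definition is_lfp (F : L -> L) (x : L) :=
  F x = x /\ forall y, F y = y -> x <= y.

End CCL.

(* Main.v *)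
Require Import Defs.
From mathcomp Require Import all_boot all_order.
Import Order.Theory.
Local Open Scope order_scope.

Section Aux.
Context {disp : Order.disp_t} {L : bLatticeType disp}.
Variable F : L -> L.
Hypothesis Fmono : monotone F.

Lemma Gl_dec (l : L) j : iter j.+1 (Gl F l) l <= iter j (Gl F l) l.
Proof.
elim: j => [|j IH]; first by rewrite /= /Gl leIr.
rewrite [iter j.+2 _ _]/= [iter j.+1 _ _]/= /Gl.
rewrite lexI leIr andbT.
apply: le_trans (leIl _ _) _. by apply: Fmono.
Qed.

Lemma Gl_le (l : L) j : iter j (Gl F l) l <= l.
Proof. case: j => [//|j] /=; by rewrite /Gl leIr. Qed.

Lemma Gl_pre (l : L) k : F (iter k (Gl F l) l) <= l ->
  F (iter k (Gl F l) l) <= iter k (Gl F l) l.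
Proof.
case: k => [//|j] H.
have Hd := Gl_dec l j.
rewrite {2}[iter j.+1 _ _]/= /Gl lexI H andbT.
by apply: Fmono.
Qed.

Lemma iter_le_pre (m : L) : F m <= m -> forall i, iter i F \bot <= m.
Proof.
move=> Hm; elim=> [|i IH]; first by rewrite /= le0x.
by apply: le_trans Hm; apply: Fmono.
Qed.

Lemma Giter_eq (b : nat -> L) j n : Giter F b j n = iter j (Gl F (b n)) (b n).
Proof. by elim: j => [//|j IH] /=; rewrite IH. Qed.

Lemma chain_up i : iter i F \bot <= iter i.+1 F (\bot : L).
Proof. elim: i => [|i IH]; first by rewrite /= le0x. by apply: Fmono. Qed.
End Aux.

Theorem mainTheorem10 (disp : Order.disp_t) (L : bLatticeType disp)
  (HL : @countably_complete disp L) (F : L -> L)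
  (Fmono : monotone F) (Fcont : omega_continuous F) (k : nat) :
  (forall b : nat -> L, (forall n, b n.+1 <= b n) ->
     (forall n, F (Giter F b k n) <= b n) ->
     forall n s, is_sup (fun y => exists i, (n <= i)%N /\ y = iter i F \bot) s ->
       s <= b n)
  /\
  (forall l : L, F (iter k (Gl F l) l) <= l ->
     forall s, is_sup (seq_range (fun i => iter i F \bot)) s ->
       is_lfp F s /\ s <= l).
Proof.
split.
- move=> b _ Hb n s [_ Hs].
  have H := Hb n; rewrite Giter_eq in H.
  have Hp := Gl_pre F Fmono _ _ H.
  apply: le_trans (Hs (iter k (Gl F (b n)) (b n)) _) _; last first.
    exact: Gl_le.
  move=> y [i [_ ->]]. exact: (iter_le_pre F Fmono _ Hp i).
- move=> l H s [Hub Hs].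
  have Hp := Gl_pre F Fmono _ _ H.
  have Hc := Fcont (fun i => iter i F \bot) (chain_up F Fmono) s (conj Hub Hs).
  case: Hc => [Fub Fs].
  have Hfix : F s = s.
    apply: le_anti; apply/andP; split.
      apply: Fs => y [i ->]. by apply: Hub; exists i.+1.
    apply: Hs => y [[|i] ->]; first by rewrite /= le0x.
    by apply: Fub; exists i.
  split; first split => //.
    move=> y Hy. apply: Hs => z [i ->]. apply: (iter_le_pre F Fmono) => //. by rewrite Hy.
  apply: Hs => y [i ->]. apply: le_trans (iter_le_pre F Fmono _ Hp i) _.
  exact: Gl_le.
Qed.
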